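(* Let $n,m,q\ge 1$, let $\mathcal{X}\in\mathfrak{R}^n$ and let $f:\mathcal{X}\to\mathbb{R}^n$, $G:\mathcal{X}\to\mathbb{R}^{n\times m}$, $h:\mathcal{X}\to\mathbb{R}^q$ define the constrained system $\dot x=f(x)+G(x)u$, $y=h(x)$, $x\in\mathcal{X}$, $u\in\mathcal{U}\in\mathfrak{R}^m$. Put $\bar g(x)=\|G(x)G(x)^\intercal\|_\infty$ and assume $f(0)=0$, $h(0)=0$, $\bar g(0)=0$. Let $\Omega\in\mathfrak{R}^n$ with $\Omega\subseteq\mathcal{X}$, and let $\mathcal{T}=\{\sigma_i\}_{i=1}^{m_{\mathcal{T}}}$ be a triangulation of $\Omega$, $\sigma_i=\mathrm{co}(\{x_{i,j}\}_{j=0}^n)$, such that $f,G,h\in\mathcal{C}^2(\mathcal{T})$. For each $i$ let $\beta_i,\tilde\beta_i,\bar\beta_i$ be real numbers with $$\beta_i\ge\max_{p,q',r\in\mathbb{Z}_1^n}\max_{\xi\in\sigma_i}\Big|\tfrac{\partial^2 f^{(p)}}{\partial x^{(q')}\partial x^{(r)}}(\xi)\Big|,\quad \tilde\beta_i\ge\max_{q',r\in\mathbb{Z}_1^n}\max_{\xi\in\sigma_i}\Big|\tfrac{\partial^2 (h^\intercal h)}{\partial x^{(q')}\partial x^{(r)}}(\xi)\Big|,\quad \bar\beta_i\ge\max_{q',r\in\mathbb{Z}_1^n}\max_{\xi\in\sigma_i}\Big|\tfrac{\partial^2 \bar g}{\partial x^{(q')}\partial x^{(r)}}(\xi)\Big|$$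 (the indicated second derivatives being taken on $\sigma_i$), and for $j\in\mathbb{Z}_0^n$ let $$c_{i,j}=\tfrac{n}{2}\|x_{i,j}-x_{i,0}\|_2\big(\max_{k\in\mathbb{Z}_1^n}\|x_{i,k}-x_{i,0}\|_2+\|x_{i,j}-x_{i,0}\|_2\big).$$ For values $\mathbf{V}=\{V_x\}_{x\in\mathbb{E}_{\mathcal{T}}}\subset\mathbb{R}$, vectors $\mathbf{L}=\{l_i\}_{i=1}^{m_{\mathcal{T}}}\subset\mathbb{R}^n$ and scalars $b_1,\gamma$, define $$H_{i,j}=f(x_{i,j})^\intercal\nabla V_i+\tfrac12\|h(x_{i,j})\|_2^2+(1_n^\intercal l_i\,\beta_i+\tfrac12\tilde\beta_i)c_{i,j}+\tfrac{1}{2\gamma}\big(\bar g(x_{i,j})+\bar\beta_i c_{i,j}\big)(1_n^\intercal l_i)^2 .$$ Then there exist $\mathbf{V},\mathbf{L},b_1,\gamma$ satisfying (i) $\gamma>0$; (ii) $V_x\ge0$ for all $x\in\mathbb{E}_{\mathcal{T}}$; (iii) $|\nabla V_i|\le l_i$ (componentwise) for all $i\in\mathbb{Z}_1^{m_{\mathcal{T}}}$; (iv) $H_{i,j}\le -b_1$ for all $i\in\mathbb{Z}_1^{m_{\mathcal{T}}}$ and all $j\in\mathbb{Z}_0^n$ with $x_{i,j}\neq0$. If moreover such values satisfy $b_1>0$, then, with $V$ the CPA interpolation of $\mathbf{V}$ on $\mathcal{T}$, the Hamilton–Jacobi inequality $$\nabla V^\intercal f(x)+\tfrac{1}{2\gamma}\|G(x)^\intercal\nabla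 V\|_2^2+\tfrac12\|h(x)\|_2^2\le 0$$ holds for all $x\in\Omega^\circ$, where at a point $x\in\sigma_i$ the gradient $\nabla V$ is taken to be $\nabla V_i$.
   Context: $\mathfrak{R}^n$ denotes the set of compact $\Omega\subset\mathbb{R}^n$ whose interior $\Omega^\circ$ is connected and contains the origin and with $\Omega=\overline{\Omega^\circ}$. An $n$-simplex is the convex hull of $n+1$ affinely independent points (its vertices). A triangulation of $\Omega\in\mathfrak{R}^n$ is a finite collection $\mathcal{T}=\{\sigma_i\}$ of $n$-simplexes whose union is $\Omega$ and such that any two intersect in a common face or the empty set; $\mathbb{E}_{\mathcal{T}}$ is its set of vertices. Convention: the vertex labelled $x_{i,0}$ of $\sigma_i$ is arbitrary unless $0\in\sigma_i$, in which case $x_{i,0}=0$. A function is in $\mathcal{C}^2(\mathcal{T})$ if it is continuous and $\mathcal{C}^2$ on each simplex of $\mathcal{T}$ (for vector/matrix functions, componentwise). Given vertex values $\{V_x\}$, let $X_i\in\mathbb{R}^{n\times n}$ have $j$-th row $(x_{i,j}-x_{i,0})^\intercal$ and $\bar V_i\in\mathbb{R}^n$ have $j$-th entry $V_{x_{i,j}}-V_{x_{i,0}}$; then $\nabla V_i=X_i^{-1}\bar V_i$ and the CPA (continuous piecewise affine) interpolation $V$ is the unique function affine on each $\sigma_i$ with gradient $\nabla V_i$ there and $V(x)=V_x$ at every vertex. $\|A\|_\infty$ for a matrix is the induced $\infty$-norm; $1_n$ is the all-ones vector; $|v|$ for a vector is componentwise absolute value. *)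

(* Defs.v *)
From HB Require Import structures.
From mathcomp Require Import all_boot all_order all_algebra.
From mathcomp Require Import all_classical all_reals all_analysis.
Import Order.TTheory GRing.Theory Num.Theory.
Import numFieldNormedType.Exports.

Set Implicit Arguments.
Unset Strict Implicit.
Unset Printing Implicit Defensive.

Local Open Scope classical_set_scope.
Local Open Scope ring_scope.

Section Defs.
Variable R : realType.

Definition frakR (n : nat) (O : set 'rV[R]_n) : Prop :=
  compact O /\ connected (interior O) /\ interior O 0 /\ O = closure (interior O).

(* convex hull of the vertices v j, j in S (a face of the simplex; S = set0 gives set0) *)
Definition hull_of (n : nat) (v : 'I_n.+1 -> 'rV[R]_n) (S : {set 'I_n.+1}) : set 'rV[R]_n :=
  [set y | exists lam : 'I_n.+1 -> R,
     (forall j, 0 <= lam j) /\ (forall j, j \notin S -> lam j = 0) /\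
     \sum_j lam j = 1 /\ y = \sum_j lam j *: v j].

Definition simplex (n : nat) (v : 'I_n.+1 -> 'rV[R]_n) : set 'rV[R]_n :=
  hull_of v [set: 'I_n.+1].

(* X_i : j-th row is (x_{i,j} - x_{i,0})^T, j = 1..n *)
Definition Xmat (n : nat) (v : 'I_n.+1 -> 'rV[R]_n) : 'M[R]_n :=
  \matrix_(j < n, k < n) (v (lift ord0 j) - v ord0) 0 k.

(* triangulation of O given by m_T simplices with vertices x i j, including the
   vertex-labelling convention x_{i,0} = 0 whenever 0 \in sigma_i *)
Definition triangulation (n mT : nat) (x : 'I_mT -> 'I_n.+1 -> 'rV[R]_n)
    (O : set 'rV[R]_n) : Prop :=
  (forall i, Xmat (x i) \in unitmx) /\
  O = [set y | exists i, simplex (x i) y] /\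
  (forall i k, i != k -> exists S1 S2,
      simplex (x i) `&` simplex (x k) = hull_of (x i) S1 /\
      simplex (x i) `&` simplex (x k) = hull_of (x k) S2) /\
  (forall i, simplex (x i) 0 -> x i ord0 = 0).

Definition partial (n : nat) (r : 'I_n) (F : 'rV[R]_n -> R) : 'rV[R]_n -> R :=
  fun y => derive F y (delta_mx 0 r).

Definition C2_on (n : nat) (U : set 'rV[R]_n) (F : 'rV[R]_n -> R) : Prop :=
  open U /\
  (forall y, U y -> differentiable F y) /\
  (forall r y, U y -> differentiable (partial r F) y) /\
  (forall q r y, U y -> {for y, continuous (partial q (partial r F))}).

(* F is a C^2 extension of g from the closed set S (g is C^2 on S) *)
Definition C2_ext (n : nat) (S : set 'rV[R]_n) (g F : 'rV[R]_n -> R) : Prop :=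
  exists U, S `<=` U /\ C2_on U F /\ (forall y, S y -> F y = g y).

Definition C2T (n mT : nat) (x : 'I_mT -> 'I_n.+1 -> 'rV[R]_n) (O : set 'rV[R]_n)
    (g : 'rV[R]_n -> R) : Prop :=
  {within O, continuous g} /\ (forall i, exists F, C2_ext (simplex (x i)) g F).

Definition norm2 (a b : nat) (A : 'M[R]_(a, b)) : R :=
  Num.sqrt (\sum_i \sum_j A i j ^+ 2).

(* induced infinity-norm of a square matrix = max absolute row sum *)
Definition norminf (n : nat) (A : 'M[R]_n) : R :=
  \big[Num.max/0]_(r < n) \sum_(c < n) `|A r c|.

Definition gbar (n m : nat) (G : 'rV[R]_n -> 'M[R]_(n, m)) (y : 'rV[R]_n) : R :=
  norminf (G y *m (G y)^T).

Definition Vbar (n : nat) (V : 'rV[R]_n -> R) (v : 'I_n.+1 -> 'rV[R]_n) : 'cV[R]_n :=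
  \col_(j < n) (V (v (lift ord0 j)) - V (v ord0)).

Definition gradV (n : nat) (V : 'rV[R]_n -> R) (v : 'I_n.+1 -> 'rV[R]_n) : 'cV[R]_n :=
  invmx (Xmat v) *m Vbar V v.

Definition cconst (n : nat) (v : 'I_n.+1 -> 'rV[R]_n) (j : 'I_n.+1) : R :=
  (n%:R / 2) * norm2 (v j - v ord0) *
  (\big[Num.max/0]_(k < n.+1 | k != ord0) norm2 (v k - v ord0) + norm2 (v j - v ord0)).

Definition sum1 (n : nat) (l : 'cV[R]_n) : R := \sum_k l k 0.

Definition Hij (n m q : nat) (f : 'rV[R]_n -> 'rV[R]_n) (G : 'rV[R]_n -> 'M[R]_(n, m))
    (h : 'rV[R]_n -> 'rV[R]_q) (V : 'rV[R]_n -> R) (v : 'I_n.+1 -> 'rV[R]_n)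
    (l : 'cV[R]_n) (beta tbeta bbeta gamma : R) (j : 'I_n.+1) : R :=
  (f (v j) *m gradV V v) 0 0 + 2^-1 * norm2 (h (v j)) ^+ 2
  + (sum1 l * beta + 2^-1 * tbeta) * cconst v j
  + (2 * gamma)^-1 * (gbar G (v j) + bbeta * cconst v j) * sum1 l ^+ 2.

Definition HJ (n m q : nat) (f : 'rV[R]_n -> 'rV[R]_n) (G : 'rV[R]_n -> 'M[R]_(n, m))
    (h : 'rV[R]_n -> 'rV[R]_q) (gamma : R) (p : 'cV[R]_n) (y : 'rV[R]_n) : R :=
  (f y *m p) 0 0 + (2 * gamma)^-1 * norm2 ((G y)^T *m p) ^+ 2
  + 2^-1 * norm2 (h y) ^+ 2.

Definition conds (n m q mT : nat) (x : 'I_mT -> 'I_n.+1 -> 'rV[R]_n)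
    (f : 'rV[R]_n -> 'rV[R]_n) (G : 'rV[R]_n -> 'M[R]_(n, m)) (h : 'rV[R]_n -> 'rV[R]_q)
    (beta tbeta bbeta : 'I_mT -> R)
    (V : 'rV[R]_n -> R) (L : 'I_mT -> 'cV[R]_n) (b1 gamma : R) : Prop :=
  0 < gamma /\
  (forall i j, 0 <= V (x i j)) /\
  (forall i k, `|gradV V (x i) k 0| <= L i k 0) /\
  (forall i j, x i j != 0 ->
     Hij f G h V (x i) (L i) (beta i) (tbeta i) (bbeta i) gamma j <= - b1).

End Defs.

(* Main.v *)
Require Import Defs.
From HB Require Import structures.
From mathcomp Require Import all_boot all_order all_algebra.
From mathcomp Require Import all_classical all_reals all_analysis.
From mathcomp Require Import ring lra.
Import Order.TTheory GRing.Theory Num.Theory.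
Import numFieldNormedType.Exports.
Local Open Scope classical_set_scope.
Local Open Scope ring_scope.

Section Helpers.
Variable R : realType.
Lemma taylor1_le (f f1 f2 : R -> R) (K : R) :
  (forall t : R, t \in `[0, 1] -> is_derive t 1 f (f1 t)) ->
  (forall t : R, t \in `[0, 1] -> is_derive t 1 f1 (f2 t)) ->
  (forall t : R, t \in `[0, 1] -> f2 t <= K) ->
  f 1 - f 0 - f1 0 <= K / 2.
Proof.
move=> Hf Hf1 Hf2.
pose P : R -> R := (cst (f1 0) * id + cst (K / 2) * (id * id))%R.
pose g : R -> R := (f - P)%R.
have Hg : forall t : R, t \in `[0, 1] -> is_derive t 1 g (f1 t - (f1 0 + K * t)).
  move=> t /Hf Ht.
  have hid : is_derive t 1 (id : R -> R) 1 := is_derive_id _ _.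
  have hc : forall a : R, is_derive t 1 (cst a : R -> R) 0 := fun a => is_derive_cst _ _ _.
  have hP := is_deriveB Ht (is_deriveD (is_deriveM (hc (f1 0)) hid)
                 (is_deriveM (hc (K/2)) (is_deriveM hid hid))).
  apply: (is_derive_eq hP).
  rewrite /cst /=.
  rewrite !scaler0 !addr0.
  rewrite /GRing.scale /=.
  lra.
have cg : {within `[0, 1], continuous g}.
  by apply: derivable_within_continuous => t /Hg [].
have [c c01 Hc] := MVT (@ltr01 R) (fun t tin => Hg t (subset_itv_oo_cc tin)) cg.
have c0 : 0 <= c by move: c01; rewrite in_itv /= => /andP[/ltW].
have c1 : c <= 1 by move: c01; rewrite in_itv /= => /andP[_ /ltW].
have sub : forall s : R, s \in `[0, c] -> s \in `[0, 1].
  by move=> s; rewrite !in_itv /= => /andP[-> /le_trans]; apply.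
have cf1 : {within `[0, c], continuous f1}.
  by apply: derivable_within_continuous => t /sub /Hf1 [].
have [d d0c Hd] := MVT_segment c0 (fun t tin => Hf1 t (sub t (subset_itv_oo_cc tin))) cf1.
have := Hf2 d (sub d d0c).
have Eg : forall t, g t = f t - (f1 0 * t + K/2 * (t*t)) by [].
move: Hc Hd; rewrite !Eg => Hc Hd.
move=> H2.
nra.
Qed.
Lemma seg_derive n (F : 'rV[R]_n -> R) (a d : 'rV[R]_n) (t : R) :
  derivable F (t *: d + a) d ->
  is_derive t 1 (fun s : R => F (s *: d + a)) ('D_d F (t *: d + a)).
Proof.
move=> HF.
have E : (fun h : R => h^-1 *: (((fun s : R => F (s *: d + a)) \o shift t) (h *: 1)
            - F (t *: d + a)))
       = (fun h : R => h^-1 *: ((F \o shift (t *: d + a)) (h *: d) - F (t *: d + a))).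
  apply: funext => h /=.
  by rewrite -[h%:A]/(h * 1) mulr1 scalerDl addrA.
split; first by rewrite /derivable E.
by rewrite /derive E.
Qed.

Lemma dir_partial n (F : 'rV[R]_n -> R) (z d : 'rV[R]_n) :
  differentiable F z ->
  'D_d F z = \sum_(r < n) d 0 r * 'D_(delta_mx 0 r) F z.
Proof.
move=> HF.
rewrite deriveE //.
under eq_bigr do rewrite deriveE //.
rewrite {1}(row_sum_delta d) linear_sum.
apply: eq_bigr => r _.
by rewrite linearZ.
Qed.

Lemma taylor1 (f f1 f2 : R -> R) (K : R) :
  (forall t : R, t \in `[0, 1] -> is_derive t 1 f (f1 t)) ->
  (forall t : R, t \in `[0, 1] -> is_derive t 1 f1 (f2 t)) ->
  (forall t : R, t \in `[0, 1] -> `|f2 t| <= K) ->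
  `|f 1 - f 0 - f1 0| <= K / 2.
Proof.
move=> Hf Hf1 Hf2.
rewrite ler_norml; apply/andP; split; last first.
  apply: (@taylor1_le f f1 f2 K Hf Hf1) => t /Hf2; exact: (le_trans (ler_norm _)).
have := @taylor1_le (- f) (- f1) (- f2) K.
rewrite /= => H.
suff : - f 1 + f 0 + f1 0 <= K / 2 by lra.
have -> : - f 1 + f 0 + f1 0 = - f 1 - - f 0 - - f1 0 by ring.
apply: H.
- by move=> t /Hf; apply: is_deriveN.
- by move=> t /Hf1; apply: is_deriveN.
- by move=> t /Hf2; rewrite /= -normrN => /(le_trans (ler_norm _)).
Qed.

Lemma taylor_seg n (F : 'rV[R]_n -> R) (S : set 'rV[R]_n) (p d : 'rV[R]_n) (B : R) :
  (forall z, S z -> differentiable F z) ->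
  (forall r z, S z -> differentiable (partial r F) z) ->
  (forall q r z, S z -> `|partial q (partial r F) z| <= B) ->
  (forall t : R, t \in `[0, 1] -> S (t *: d + p)) ->
  `|F (d + p) - F p - 'D_d F p| <= B / 2 * (\sum_(r < n) `|d 0 r|) ^+ 2.
Proof.
move=> HF HpF HB Hseg.
pose phi := fun s : R => F (s *: d + p).
pose phi1 := fun s : R => \sum_(r < n) d 0 r * partial r F (s *: d + p).
pose phi2 := fun s : R => \sum_(r < n) d 0 r *
                 \sum_(q < n) d 0 q * partial q (partial r F) (s *: d + p).
have H1 : forall t : R, t \in `[0, 1] -> is_derive t 1 phi (phi1 t).
  move=> t /Hseg St.
  apply: (is_derive_eq (@seg_derive n F p d t (diff_derivable (v:=d) (HF _ St)))).
  by rewrite dir_partial //; apply: HF.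
have H2 : forall t : R, t \in `[0, 1] -> is_derive t 1 phi1 (phi2 t).
  move=> t /Hseg St.
  have -> : phi1 = \sum_(r < n) (d 0 r \*: (fun s : R => partial r F (s *: d + p))).
    apply: funext => s; rewrite fct_sumE /phi1; apply: eq_bigr => r _ //.
  rewrite /phi2; apply: is_derive_sum => r.
  apply: is_deriveZ.
  apply: (is_derive_eq (@seg_derive n (partial r F) p d t (diff_derivable (v:=d) (HpF r _ St)))).
  by rewrite dir_partial //; apply: HpF.
have H3 : forall t : R, t \in `[0, 1] -> `|phi2 t| <= B * (\sum_(r < n) `|d 0 r|) ^+ 2.
  move=> t /Hseg St.
  set SS := \sum_(r < n) `|d 0 r|.
  have -> : B * SS ^+ 2 = \sum_(r < n) `|d 0 r| * (B * SS).
    by rewrite -mulr_suml /SS; ring.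
  rewrite /phi2.
  apply: (le_trans (ler_norm_sum _ _ _)); apply: ler_sum => r _.
  rewrite normrM; apply: ler_wpM2l => //.
  rewrite /SS mulr_sumr.
  apply: (le_trans (ler_norm_sum _ _ _)); apply: ler_sum => q _.
  by rewrite normrM mulrC; apply: ler_wpM2r => //; apply: HB.
have := @taylor1 phi phi1 phi2 _ H1 H2 H3.
rewrite /phi /phi1 scale1r scale0r add0r -dir_partial; last first.
  by apply: HF; have := Hseg 0; rewrite scale0r add0r; apply; rewrite in_itv /= lexx ler01.
by rewrite mulrAC.
Qed.

Lemma simplex_vertex n (v : 'I_n.+1 -> 'rV[R]_n) j : simplex v (v j).
Proof.
exists (fun k => (k == j)%:R); split; first by move=> k; rewrite ler0n.
split; first by move=> k; rewrite !inE.
split.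
  by rewrite (bigD1 j) //= eqxx big1 ?addr0 // => k /negbTE ->.
by rewrite (bigD1 j) //= eqxx scale1r big1 ?addr0 // => k /negbTE ->; rewrite scale0r.
Qed.

Lemma simplex_convex n (v : 'I_n.+1 -> 'rV[R]_n) a b (t : R) :
  simplex v a -> simplex v b -> t \in `[0, 1] -> simplex v (t *: (b - a) + a).
Proof.
move=> [la [la0 [_ [la1 ->]]]] [lb [lb0 [_ [lb1 ->]]]].
rewrite in_itv /= => /andP[t0 t1].
exists (fun k => t * lb k + (1 - t) * la k); split.
  by move=> k; rewrite addr_ge0 // mulr_ge0 // ?subr_ge0.
split; first by move=> k; rewrite !inE.
split.
  by rewrite big_split /= -!mulr_sumr lb1 la1; ring.
rewrite [RHS](eq_bigr (fun j => t *: (lb j *: v j) + (1 - t) *: (la j *: v j))); last first.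
  by move=> j _; rewrite scalerDl !scalerA.
symmetry; rewrite big_split /= -!scaler_sumr scalerBl scale1r scalerBr.
by rewrite addrA addrAC.
Qed.

Lemma wCS (k : nat) (w a : 'I_k -> R) :
  (forall i, 0 <= w i) ->
  (\sum_i w i * a i) ^+ 2 <= (\sum_i w i) * (\sum_i w i * a i ^+ 2).
Proof.
move=> w0.
have H0 : 0 <= \sum_i \sum_j w i * w j * (a i - a j) ^+ 2.
  by apply: sumr_ge0 => i _; apply: sumr_ge0 => j _; apply: mulr_ge0; [exact: mulr_ge0 | exact: sqr_ge0].
have E : \sum_i \sum_j w i * w j * (a i - a j) ^+ 2 =
   \sum_i ((w i * a i ^+ 2) * (\sum_j w j) + w i * (\sum_j w j * a j ^+ 2)
           - (2 * (w i * a i)) * (\sum_j w j * a j)).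
  apply: eq_bigr => i _.
  rewrite !mulr_sumr -big_split -sumrB /=.
  by apply: eq_bigr => j _; ring.
rewrite E sumrB big_split /= -!mulr_suml -mulr_sumr in H0.
lra.
Qed.

Definition N1 n (w : 'rV[R]_n) := \sum_(r < n) `|w 0 r|.
Arguments N1 {n}.

Lemma taylor_simplex n (v : 'I_n.+1 -> 'rV[R]_n) (g F : 'rV[R]_n -> R) (B : R)
    (lam : 'I_n.+1 -> R) :
  C2_ext (simplex v) g F ->
  (forall q r xi, simplex v xi -> `|partial q (partial r F) xi| <= B) ->
  (forall j, 0 <= lam j) -> \sum_j lam j = 1 ->
  `|g (\sum_j lam j *: v j) - \sum_j lam j * g (v j)| <=
     B / 2 * (N1 (\sum_j lam j *: v j - v ord0) ^+ 2
              + \sum_j lam j * N1 (v j - v ord0) ^+ 2).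
Proof.
move=> [U [SU [[oU [dF [dpF _]]] Fg]]] HB lam0 lam1.
set y := \sum_j lam j *: v j; set p := v ord0.
have Sy : simplex v y.
  by exists lam; split=> //; split=> //; move=> k; rewrite !inE.
have HF : forall z, simplex v z -> differentiable F z := fun z Sz => dF z (SU z Sz).
have HpF : forall r z, simplex v z -> differentiable (partial r F) z :=
  fun r z Sz => dpF r z (SU z Sz).
have Tay : forall a, simplex v a ->
    `|F a - F p - 'd F p (a - p)| <= B / 2 * N1 (a - p) ^+ 2.
  move=> a Sa.
  have := @taylor_seg n F (simplex v) p (a - p) B HF HpF HB (fun t tin => @simplex_convex n v p a t (@simplex_vertex n v ord0) Sa tin).
  by rewrite subrK deriveE //; apply: HF; apply: simplex_vertex.
pose e a := F a - F p - 'd F p (a - p).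
have Elin : \sum_j lam j * 'd F p (v j - p) = 'd F p (y - p).
  have -> : y - p = \sum_j lam j *: (v j - p).
    rewrite (eq_bigr (fun j => lam j *: v j - lam j *: p)); last by move=> j _; rewrite scalerBr.
    by rewrite sumrB -scaler_suml lam1 scale1r.
  by rewrite linear_sum; apply: eq_bigr => j _; rewrite linearZ.
have E2 : \sum_j lam j * e (v j) = \sum_j lam j * F (v j) - F p - 'd F p (y - p).
  have -> : F p = \sum_j lam j * F p by rewrite -mulr_suml lam1 mul1r.
  rewrite -Elin -!sumrB; apply: eq_bigr => j _; rewrite /e; ring.
have Eid : g y - \sum_j lam j * g (v j) = e y - \sum_j lam j * e (v j).
  rewrite E2 -Fg // (eq_bigr (fun j => lam j * F (v j))); last first.
    by move=> j _; rewrite Fg //; apply: simplex_vertex.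
  rewrite /e; ring.
rewrite Eid.
apply: (le_trans (ler_normB _ _)).
rewrite mulrDr lerD //; first exact: Tay.
apply: (le_trans (ler_norm_sum _ _ _)).
rewrite mulr_sumr; apply: ler_sum => j _.
rewrite normrM ger0_norm // mulrCA; apply: ler_wpM2l => //.
by apply: Tay; apply: simplex_vertex.
Qed.

Lemma norm2_sq n (w : 'rV[R]_n) : norm2 w ^+ 2 = \sum_(r < n) w 0 r ^+ 2.
Proof.
rewrite /norm2 sqr_sqrtr; last by apply: sumr_ge0 => i _; apply: sumr_ge0 => j _; exact: sqr_ge0.
by rewrite big_ord1.
Qed.

Lemma norm2_ge0 a b (w : 'M[R]_(a, b)) : 0 <= norm2 w.
Proof. exact: sqrtr_ge0. Qed.

Lemma N1_ge0 n (w : 'rV[R]_n) : 0 <= N1 w.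
Proof. by apply: sumr_ge0 => r _. Qed.

Lemma N1_sq n (w : 'rV[R]_n) : N1 w ^+ 2 <= n%:R * norm2 w ^+ 2.
Proof.
have := @wCS n (fun _ => 1) (fun r => `|w 0 r|) (fun _ => ler01).
rewrite /N1 norm2_sq sumr_const card_ord.
under eq_bigr do rewrite mul1r.
under [X in _ <= _ * X]eq_bigr do rewrite mul1r real_normK ?num_real //.
done.
Qed.

Lemma N1_sum n k (lam : 'I_k -> R) (w : 'I_k -> 'rV[R]_n) :
  (forall j, 0 <= lam j) ->
  N1 (\sum_j lam j *: w j) <= \sum_j lam j * N1 (w j).
Proof.
move=> lam0; rewrite /N1.
under [X in _ <= X]eq_bigr do rewrite mulr_sumr.
rewrite exchange_big /=; apply: ler_sum => r _.
rewrite summxE; apply: (le_trans (ler_norm_sum _ _ _)); apply: ler_sum => j _.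
by rewrite mxE normrM ger0_norm.
Qed.

Lemma bary_sub n (v : 'I_n.+1 -> 'rV[R]_n) (lam : 'I_n.+1 -> R) p :
  \sum_j lam j = 1 ->
  \sum_j lam j *: v j - p = \sum_j lam j *: (v j - p).
Proof.
move=> lam1.
rewrite [RHS](eq_bigr (fun j => lam j *: v j - lam j *: p)); last by move=> j _; rewrite scalerBr.
by rewrite sumrB -scaler_suml lam1 scale1r.
Qed.

Arguments N1_sum {n k}. Arguments N1_ge0 {n}. Arguments N1_sq {n}. Arguments bary_sub {n}.
Arguments norm2_ge0 {a b}.

Lemma conv_cconst n (v : 'I_n.+1 -> 'rV[R]_n) (B : R) (lam : 'I_n.+1 -> R) :
  0 <= B -> (forall j, 0 <= lam j) -> \sum_j lam j = 1 ->
  B / 2 * (N1 (\sum_j lam j *: v j - v ord0) ^+ 2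
              + \sum_j lam j * N1 (v j - v ord0) ^+ 2)
  <= B * \sum_j lam j * cconst v j.
Proof.
move=> B0 lam0 lam1.
set e := fun j => norm2 (v j - v ord0).
set M := \big[Num.max/0]_(k < n.+1 | k != ord0) norm2 (v k - v ord0).
have e0 : forall j, 0 <= e j by move=> j; exact: norm2_ge0.
have eM : forall j, e j ^+ 2 <= e j * M.
  move=> j; case: (eqVneq j ord0) => [->|jn0].
    have -> : e ord0 = 0.
      rewrite /e subrr /norm2 big1 ?sqrtr0 // => i _.
      by rewrite big1 // => k _; rewrite mxE expr0n.
    by rewrite expr0n mul0r.
  rewrite expr2 ler_wpM2l //.
  exact: (le_bigmax_cond _ (fun k => norm2 (v k - v ord0)) jn0).
have S1 : \sum_j lam j * N1 (v j - v ord0) ^+ 2 <= n%:R * \sum_j lam j * e j ^+ 2.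
  rewrite mulr_sumr; apply: ler_sum => j _.
  by rewrite [X in _ <= X]mulrCA; apply: ler_wpM2l => //; apply: N1_sq.
have S0 : N1 (\sum_j lam j *: v j - v ord0) ^+ 2 <= \sum_j lam j * N1 (v j - v ord0) ^+ 2.
  rewrite bary_sub //.
  have h1 := N1_sum lam (fun j => v j - v ord0) lam0.
  have h2 := @wCS n.+1 lam (fun j => N1 (v j - v ord0)) lam0.
  rewrite lam1 mul1r in h2.
  have h0 := N1_ge0 (\sum_j lam j *: (v j - v ord0)).
  apply: le_trans h2.
  by rewrite ler_pXn2r // ?nnegrE //; apply: sumr_ge0 => j _; rewrite mulr_ge0 // N1_ge0.
have S2 : \sum_j lam j * e j ^+ 2 <= \sum_j lam j * (e j * M).
  by apply: ler_sum => j _; apply: ler_wpM2l.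
have -> : B * \sum_j lam j * cconst v j =
          B / 2 * (n%:R * (\sum_j lam j * (e j * M) + \sum_j lam j * e j ^+ 2)).
  rewrite -big_split /= !mulr_sumr; apply: eq_bigr => j _.
  rewrite /cconst -/M -/(e j); ring.
apply: ler_wpM2l; first by rewrite divr_ge0.
have hn : 0 <= (n%:R : R) by rewrite ler0n.
nra.
Qed.
Lemma near_eq_differentiable (V W : normedModType R) (f g : V -> W) (x : V) :
  (\forall y \near x, f y = g y) -> differentiable g x -> differentiable f x.
Proof.
move=> fg dg.
have dgl := diff_locally dg.
have fx : f x = g x := nbhs_singleton fg.
have fg0 : \forall h \near 0, f (h + x) = g (h + x).
  by move: fg; rewrite (near_shift 0 x) /= subr0.
have key : f \o shift x = cst (f x) + 'd g x +o_ 0 id.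
  apply/eqaddoP => eps eps0.
  move/eqaddoP: dgl => /(_ eps eps0).
  apply: filter_app; move: fg0; apply: filter_app; near=> h => Eh.
  by rewrite !fctE /= Eh fx.
have dfE : 'd f x = 'd g x :> (V -> W) := diff_unique (diff_continuous dg) key.
apply/diff_locallyP; rewrite dfE. split; [exact: diff_continuous | exact: key].
Unshelve. all: by end_near. Qed.

Lemma open_all n q (U : 'I_q -> set 'rV[R]_n) :
  (forall k, open (U k)) -> open (fun y => forall k, U k y).
Proof.
move=> oU; rewrite openE => y Uy; rewrite /interior.
apply: (@filter_forall _ 'I_q U (nbhs y) (nbhs_filter y)) => k.
by have := oU k; rewrite openE => /(_ y (Uy k)).
Qed.

Lemma open_near n (U : set 'rV[R]_n) z : open U -> U z -> \forall w \near z, U w.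
Proof. by rewrite openE => /[apply]. Qed.
Arguments open_near {n U z}.

Lemma continuous_fsum n q (f : 'I_q -> 'rV[R]_n -> R) z :
  (forall k, {for z, continuous (f k)}) -> {for z, continuous (\sum_k f k)}.
Proof.
move=> Hf; elim/big_ind: _ => [|a b ca cb|k _].
- first [exact: cst_continuous | exact: (@cvg_cst _ (0:R)) | apply: continuous_cst | idtac "FAIL"].
- exact: continuousD.
- exact: Hf.
Qed.

Lemma C2_on_sumsq n q (U : set 'rV[R]_n) (Fk : 'I_q -> 'rV[R]_n -> R) :
  open U -> (forall k, C2_on U (Fk k)) -> C2_on U (\sum_k (Fk k * Fk k)).
Proof.
move=> oU HC.
have dF : forall k z, U z -> differentiable (Fk k) z by move=> k z Uz; case: (HC k) => _ [+ _]; apply.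
have dpF : forall k r z, U z -> differentiable (partial r (Fk k)) z.
  by move=> k r z Uz; case: (HC k) => _ [_ [+ _]]; apply.
have cF : forall k q' r z, U z -> {for z, continuous (partial q' (partial r (Fk k)))}.
  by move=> k q' r z Uz; case: (HC k) => _ [_ [_ +]]; apply.
set F := \sum_k (Fk k * Fk k).
pose G r := \sum_k (Fk k * partial r (Fk k) + Fk k * partial r (Fk k)).
have dFF : forall z, U z -> differentiable F z.
  move=> z Uz; apply: differentiable_sum => k; apply: differentiableM; exact: dF.
have EG : forall r z, U z -> partial r F z = G r z.
  move=> r z Uz; rewrite /partial /F derive_sum; last first.
    by move=> k; apply: diff_derivable; apply: differentiableM; apply: dF.
  rewrite /G fct_sumE; apply: eq_bigr => k _.
  rewrite deriveM; try (apply: diff_derivable; exact: dF).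
  by rewrite /GRing.scale.
have dG : forall r z, U z -> differentiable (G r) z.
  move=> r z Uz; apply: differentiable_sum => k.
  by apply: differentiableD; apply: differentiableM; [exact: dF | exact: dpF | exact: dF | exact: dpF].
pose H q' r := \sum_k (Fk k * partial q' (partial r (Fk k)) + partial r (Fk k) * partial q' (Fk k)
                     + (Fk k * partial q' (partial r (Fk k)) + partial r (Fk k) * partial q' (Fk k))).
have EH : forall q' r z, U z -> partial q' (partial r F) z = H q' r z.
  move=> q' r z Uz; rewrite /partial.
  have NE : \forall w \near z, partial r F w = G r w.
    by move: (open_near oU Uz); apply: filterS => w Uw; apply: EG.
  rewrite (near_eq_derive _ NE).
  rewrite /G derive_sum; last first.
    move=> k; apply: diff_derivable; apply: differentiableD; apply: differentiableM;
      [exact: dF | exact: dpF | exact: dF | exact: dpF].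
  rewrite /H fct_sumE; apply: eq_bigr => k _.
  have a1 := dF k z Uz; have a2 := dpF k r z Uz.
  rewrite deriveD; [| exact/diff_derivable/differentiableM | exact/diff_derivable/differentiableM].
  rewrite deriveM; [| exact/diff_derivable | exact/diff_derivable].
  by rewrite /GRing.scale.
have cH : forall q' r z, U z -> {for z, continuous (H q' r)}.
  move=> q' r z Uz; apply: continuous_fsum => k.
  have c1 : {for z, continuous (Fk k)} by apply: differentiable_continuous; exact: dF.
  have c2 : forall r', {for z, continuous (partial r' (Fk k))}.
    by move=> r'; apply: differentiable_continuous; exact: dpF.
  have c3 : {for z, continuous (partial q' (partial r (Fk k)))} by exact: cF.
  apply: continuousD; apply: continuousD; apply: continuousM => //.
split=> //; split=> //; split.
  move=> r z Uz; apply: (@near_eq_differentiable _ _ _ (G r)) (dG r z Uz).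
  by move: (open_near oU Uz); apply: filterS => w Uw; apply: EG.
move=> q' r z Uz.
have NE : \forall w \near z, H q' r w = partial q' (partial r F) w.
  by move: (open_near oU Uz); apply: filterS => w Uw; rewrite EH.
have := cH q' r z Uz.
rewrite /prop_for /continuous_at /= -EH //.
move=> cHz.
rewrite /prop_for /continuous_at /=.
exact: (cvg_trans (near_eq_cvg NE) cHz).
Qed.

Lemma C2_on_sub n (U U' : set 'rV[R]_n) F : open U' -> U' `<=` U -> C2_on U F -> C2_on U' F.
Proof.
move=> oU' sub [_ [d1 [d2 c]]]; split=> //; split; first by move=> y /sub; apply: d1.
split; first by move=> r y /sub; apply: d2.
by move=> q' r y /sub; apply: c.
Qed.

Lemma C2_ext_sumsq n q (S : set 'rV[R]_n) (h : 'rV[R]_n -> 'rV[R]_q) :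
  (forall k, exists F, C2_ext S (fun y => h y 0 k) F) ->
  exists F, C2_ext S (fun y => \sum_k h y 0 k ^+ 2) F.
Proof.
move=> HE.
have : forall k : 'I_q, exists p : ('rV[R]_n -> R) * set 'rV[R]_n,
    S `<=` p.2 /\ C2_on p.2 p.1 /\ (forall y, S y -> p.1 y = h y 0 k).
  by move=> k; have [F [U [? [? ?]]]] := HE k; exists (F, U).
move=> /choice [FU HFU].
pose Fk k := (FU k).1; pose U := fun y => forall k, (FU k).2 y.
have oU : open U by apply: open_all => k; have [_ [[+ _] _]] := HFU k.
exists (\sum_k (Fk k * Fk k)), U; split.
  by move=> y Sy k; have [+ _] := HFU k; apply.
split.
  apply: C2_on_sumsq => // k; apply: (@C2_on_sub n (FU k).2 U (Fk k) oU).
    by move=> y; apply.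
  by have [_ [+ _]] := HFU k.
move=> y Sy; rewrite fct_sumE; apply: eq_bigr => k _.
have [_ [_ E]] := HFU k. by rewrite /Fk -[((FU k).1 * (FU k).1) y]/((FU k).1 y * (FU k).1 y) E // expr2.
Qed.

Arguments taylor_simplex {n v g F B lam}.

Lemma taylor_c n (v : 'I_n.+1 -> 'rV[R]_n) (g F : 'rV[R]_n -> R) (B : R)
    (lam : 'I_n.+1 -> R) :
  0 <= B -> C2_ext (simplex v) g F ->
  (forall q r xi, simplex v xi -> `|partial q (partial r F) xi| <= B) ->
  (forall j, 0 <= lam j) -> \sum_j lam j = 1 ->
  `|g (\sum_j lam j *: v j) - \sum_j lam j * g (v j)| <= B * \sum_j lam j * cconst v j.
Proof.
move=> B0 HC HB lam0 lam1.
apply: le_trans (taylor_simplex HC HB lam0 lam1) _.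
exact: conv_cconst.
Qed.

Lemma gbar_ge0 n m (G : 'rV[R]_n -> 'M[R]_(n, m)) y : (0 < n)%N -> 0 <= gbar G y.
Proof.
move=> n0; rewrite /gbar /norminf.
apply: le_trans (le_bigmax _ _ (Ordinal n0)).
by apply: sumr_ge0 => c _.
Qed.

Lemma quad_bound n m (A : 'M[R]_(n, m)) (p l : 'cV[R]_n) :
  (0 < n)%N -> (forall k, `|p k 0| <= l k 0) ->
  norm2 (A^T *m p) ^+ 2 <= norminf (A *m A^T) * (\sum_k l k 0) ^+ 2.
Proof.
move=> n0 pl.
set S := \sum_k l k 0.
have l0 : forall k, 0 <= l k 0 by move=> k; apply: le_trans (pl k).
have lS : forall k, l k 0 <= S.
  by move=> k; rewrite /S (bigD1 k) //= lerDl; apply: sumr_ge0.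
set M := A *m A^T.
have gb0 : 0 <= norminf M.
  rewrite /norminf; apply: le_trans (le_bigmax _ _ (Ordinal n0)).
  by apply: sumr_ge0 => c _.
have E : norm2 (A^T *m p) ^+ 2 = \sum_a \sum_c p a 0 * p c 0 * M a c.
  rewrite /norm2 sqr_sqrtr; last first.
    by apply: sumr_ge0 => b _; apply: sumr_ge0 => j _; exact: sqr_ge0.
  under eq_bigr do rewrite big_ord1 mxE expr2 mulr_suml.
  under eq_bigr do under eq_bigr do rewrite mulr_sumr.
  rewrite exchange_big /=; apply: eq_bigr => a _.
  rewrite exchange_big /=; apply: eq_bigr => c _.
  rewrite !mxE mulr_sumr; apply: eq_bigr => b _.
  by rewrite !mxE; ring.
rewrite E.
have step1 : forall a, \sum_c p a 0 * p c 0 * M a c <= `|p a 0| * (S * norminf M).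
  move=> a.
  have : \sum_c `|M a c| <= norminf M by apply: (le_bigmax _ (fun r => \sum_c `|M r c|) a).
  move=> Ha.
  apply: le_trans (_ : \sum_c `|p a 0| * (S * `|M a c|) <= _).
    apply: ler_sum => c _.
    apply: le_trans (ler_norm _) _.
    rewrite !normrM -mulrA; apply: ler_wpM2l => //.
    by apply: ler_wpM2r => //; apply: le_trans (pl c) (lS c).
  rewrite -mulr_sumr; apply: ler_wpM2l => //.
  by rewrite -mulr_sumr; apply: ler_wpM2l; first exact: le_trans (l0 a) (lS a).
apply: le_trans (ler_sum _ (fun a _ => step1 a)) _.
rewrite -mulr_suml.
have : \sum_a `|p a 0| <= S by apply: ler_sum => a _; apply: pl.
have S0 : 0 <= S by apply: sumr_ge0.
move=> HpS.
have : (\sum_a `|p a 0|) * (S * norminf M) <= S * (S * norminf M).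
  by apply: ler_wpM2r => //; rewrite mulr_ge0.
move=> H1; apply: le_trans H1 _.
by rewrite expr2 mulrA mulrC mulrA.
Qed.

Lemma vertex0 n (v : 'I_n.+1 -> 'rV[R]_n) j :
  Xmat v \in unitmx -> v j = v ord0 -> j = ord0.
Proof.
case: (unliftP ord0 j) => [j'|] -> //= Hu E; exfalso.
have := mulmxV Hu; move/matrixP => /(_ j' j').
rewrite !mxE eqxx /= big1 => [|k _]; last by rewrite /Xmat mxE E subrr (_ : (0 : 'rV[R]_n) 0 k = 0) ?mul0r // mxE.
by move/eqP; rewrite eq_sym oner_eq0.
Qed.

End Helpers.

Arguments simplex_vertex {R n} v j.
Arguments taylor_c {R n v g F B lam}.
Arguments C2_ext_sumsq {R n q S h}.
Arguments quad_bound {R n m A p l}.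
Arguments vertex0 {R n v j}.
Arguments norm2_sq {R n}.

Theorem theorem1 (R : realType) (n m q : nat)
  (X : set 'rV[R]_n) (U : set 'rV[R]_m)
  (f : 'rV[R]_n -> 'rV[R]_n) (G : 'rV[R]_n -> 'M[R]_(n, m)) (h : 'rV[R]_n -> 'rV[R]_q)
  (Omega : set 'rV[R]_n) (mT : nat) (x : 'I_mT -> 'I_n.+1 -> 'rV[R]_n)
  (beta tbeta bbeta : 'I_mT -> R) :
  (0 < n)%N -> (0 < m)%N -> (0 < q)%N ->
  frakR X -> frakR U ->
  f 0 = 0 -> h 0 = 0 -> gbar G 0 = 0 ->
  frakR Omega -> Omega `<=` X ->
  triangulation x Omega ->
  (forall p, C2T x Omega (fun y => f y 0 p)) ->
  (forall a b, C2T x Omega (fun y => G y a b)) ->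
  (forall k, C2T x Omega (fun y => h y 0 k)) ->
  C2T x Omega (gbar G) ->
  (forall i p F, C2_ext (simplex (x i)) (fun y => f y 0 p) F ->
     forall q' r xi, simplex (x i) xi -> `|partial q' (partial r F) xi| <= beta i) ->
  (forall i F, C2_ext (simplex (x i)) (fun y => \sum_k h y 0 k ^+ 2) F ->
     forall q' r xi, simplex (x i) xi -> `|partial q' (partial r F) xi| <= tbeta i) ->
  (forall i F, C2_ext (simplex (x i)) (gbar G) F ->
     forall q' r xi, simplex (x i) xi -> `|partial q' (partial r F) xi| <= bbeta i) ->
  (exists (V : 'rV[R]_n -> R) (L : 'I_mT -> 'cV[R]_n) (b1 gamma : R),
     conds x f G h beta tbeta bbeta V L b1 gamma) /\
  (forall (V : 'rV[R]_n -> R) (L : 'I_mT -> 'cV[R]_n) (b1 gamma : R),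
     conds x f G h beta tbeta bbeta V L b1 gamma -> 0 < b1 ->
     forall i y, simplex (x i) y -> interior Omega y ->
       HJ f G h gamma (gradV V (x i)) y <= 0).
Proof.
move=> n0 m0 q0 fX fU f0 h0 g0 fO OX tri Cf CG Ch Cg Bf Bh Bg.
have [Xunit [_ [_ tri0]]] := tri.
split.
  pose T i j := Hij f G h (fun _ => 0) (x i) (0 : 'cV[R]_n) (beta i) (tbeta i) (bbeta i) 1 j.
  exists (fun _ => 0), (fun _ => 0), (- \big[Num.max/0]_i \big[Num.max/0]_j T i j), 1.
  split; first exact: ltr01.
  split; first by [].
  split.
    move=> i k.
    have -> : gradV (fun _ : 'rV[R]_n => (0:R)) (x i) = 0.
      rewrite /gradV (_ : Vbar _ _ = 0) ?mulmx0 //.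
      by apply/matrixP => a b; rewrite !mxE subrr.
    by rewrite !mxE normr0.
  move=> i j _; rewrite opprK.
  apply: le_trans (le_bigmax _ (fun j => T i j) j) _.
  exact: (le_bigmax _ (fun i => \big[Num.max/0]_j T i j) i).
move=> V L b1 gamma [gam0 [V0 [gradL Hneg]]] b10 i y Sy _.
case: (Sy) => lam [lam0 [_ [lam1 ye]]].
have Hn := Hneg i; have pl := gradL i.
set v := x i in Hn pl *.
set l := L i in Hn pl *.
set p := gradV V v in Hn pl *.
set S := sum1 l in Hn *.
set C := \sum_j lam j * cconst v j.
have l0 : forall k, 0 <= l k 0 by move=> k; apply: le_trans (pl k).
have vS : forall j, simplex v (v j) := simplex_vertex v.
pose o : 'I_n := Ordinal n0.
have TF : forall k, `|f y 0 k - \sum_j lam j * f (v j) 0 k| <= beta i * C.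
  move=> k; have [F HF] := (Cf k).2 i.
  have B0 : 0 <= beta i by apply: le_trans (Bf i k F HF o o _ (vS ord0)).
  by rewrite ye; exact: (taylor_c B0 HF (Bf i k F HF) lam0 lam1).
have TH : `|\sum_k h y 0 k ^+ 2 - \sum_j lam j * \sum_k h (v j) 0 k ^+ 2| <= tbeta i * C.
  have [F HF] := C2_ext_sumsq (fun k => (Ch k).2 i).
  have B0 : 0 <= tbeta i by apply: le_trans (Bh i F HF o o _ (vS ord0)).
  by rewrite ye; exact: (taylor_c B0 HF (Bh i F HF) lam0 lam1).
have TG : `|gbar G y - \sum_j lam j * gbar G (v j)| <= bbeta i * C.
  have [F HF] := Cg.2 i.
  have B0 : 0 <= bbeta i by apply: le_trans (Bg i F HF o o _ (vS ord0)).
  by rewrite ye; exact: (taylor_c B0 HF (Bg i F HF) lam0 lam1).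
have A : (f y *m p) 0 0 <= \sum_j lam j * (f (v j) *m p) 0 0 + S * (beta i * C).
  have E1 : \sum_j lam j * (f (v j) *m p) 0 0 = \sum_k (\sum_j lam j * f (v j) 0 k) * p k 0.
    under eq_bigr do rewrite mxE mulr_sumr.
    rewrite exchange_big /=; apply: eq_bigr => k _.
    by rewrite mulr_suml; apply: eq_bigr => j _; rewrite mulrA.
  have E2 : S * (beta i * C) = \sum_k l k 0 * (beta i * C) by rewrite /S /sum1 mulr_suml.
  rewrite E1 E2 -big_split mxE /=; apply: ler_sum => k _.
  set a := \sum_j lam j * f (v j) 0 k.
  have h1 : (f y 0 k - a) * p k 0 <= `|f y 0 k - a| * `|p k 0|.
    by rewrite -normrM; exact: ler_norm.
  have h2 : `|f y 0 k - a| * `|p k 0| <= beta i * C * l k 0.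
    apply: ler_pM; [exact: normr_ge0 | exact: normr_ge0 | exact: TF | exact: pl].
  rewrite mulrBl in h1.
  lra.
have B : norm2 (h y) ^+ 2 <= \sum_j lam j * norm2 (h (v j)) ^+ 2 + tbeta i * C.
  rewrite norm2_sq.
  rewrite [X in _ <= X + _](eq_bigr (fun j => lam j * \sum_k h (v j) 0 k ^+ 2)); last by move=> j _; rewrite norm2_sq.
  have := le_trans (ler_norm _) TH.
  lra.
have Cq : norm2 ((G y)^T *m p) ^+ 2 <= gbar G y * S ^+ 2 := quad_bound n0 pl.
have D : gbar G y <= \sum_j lam j * gbar G (v j) + bbeta i * C.
  have := le_trans (ler_norm _) TG.
  lra.
have norm20 : forall a b, norm2 (0 : 'M[R]_(a, b)) = 0.
  move=> a b; rewrite /norm2 big1 ?sqrtr0 // => r _.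
  by rewrite big1 // => c _; rewrite mxE expr0n.
have Hle : forall j, Hij f G h V v l (beta i) (tbeta i) (bbeta i) gamma j <= 0.
  move=> j; case: (eqVneq (v j) 0) => [vj0|vjn0]; last first.
    by have := Hn j vjn0; lra.
  have Sz : simplex v 0 := eq_rect _ (fun z => simplex v z) (vS j) _ vj0.
  have v00 : v ord0 = 0 := tri0 i Sz.
  have jo : j = ord0 := vertex0 (Xunit i) (etrans vj0 (esym v00)).
  rewrite jo /Hij v00 f0 h0 g0 /cconst subrr norm20 mul0mx mxE norm20.
  lra.
have EH : \sum_j lam j * Hij f G h V v l (beta i) (tbeta i) (bbeta i) gamma j =
   \sum_j lam j * (f (v j) *m p) 0 0 + 2^-1 * \sum_j lam j * norm2 (h (v j)) ^+ 2
   + (S * beta i + 2^-1 * tbeta i) * C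
   + (2 * gamma)^-1 * S ^+ 2 * \sum_j lam j * gbar G (v j)
   + (2 * gamma)^-1 * S ^+ 2 * bbeta i * C.
  rewrite /C !mulr_sumr -!big_split /=; apply: eq_bigr => j _.
  rewrite /Hij -/p -/S; ring.
have sumle : \sum_j lam j * Hij f G h V v l (beta i) (tbeta i) (bbeta i) gamma j <= 0.
  by apply: sumr_le0 => j _; apply: mulr_ge0_le0.
have ig : 0 < (2 * gamma)^-1 by rewrite invr_gt0 mulr_gt0.
have S2 : 0 <= S ^+ 2 := sqr_ge0 S.
have X1 : (2 * gamma)^-1 * norm2 ((G y)^T *m p) ^+ 2 <=
          (2 * gamma)^-1 * ((\sum_j lam j * gbar G (v j) + bbeta i * C) * S ^+ 2).
  apply: ler_wpM2l; first exact: ltW.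
  exact: le_trans Cq (ler_wpM2r S2 D).
rewrite /HJ.
rewrite EH in sumle.
lra.
Qed.
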